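(* Let $H$ be an $n\times(n-1)$ unreduced upper Hessenberg $0/1$-matrix whose columns together with the origin form an acute $(n-1)$-simplex in $[0,1]^n$. Then there exist at most two $(n+1)\times n$ unreduced upper Hessenberg $0/1$-matrices whose columns together with the origin form an acute $n$-simplex in $[0,1]^{n+1}$ and whose top left $n\times(n-1)$ submatrix equals $H$.
   Context: An $m\times p$ matrix $A=(a_{ij})$ is unreduced upper Hessenberg if $a_{ij}=0$ whenever $i>j+1$ and $a_{j+1,j}\neq0$ for all $j$. The columns $p_1,\dots,p_j$ of a $0/1$-matrix $P$ together with the origin form an acute $j$-simplex if $G=P^\top P$ is invertible, every off-diagonal entry of $G^{-1}$ is negative and every row sum of $G^{-1}$ is positive (equivalently, all dihedral angles of the simplex are acute). *)

(* Defs.v *)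
From mathcomp Require Import all_boot all_order all_algebra.
Set Implicit Arguments. Unset Strict Implicit. Unset Printing Implicit Defensive.
Import Order.TTheory GRing.Theory Num.Theory.
Local Open Scope ring_scope.

Definition zero_one_mx (m p : nat) (A : 'M[rat]_(m, p)) : Prop :=
  forall i j, A i j = 0 \/ A i j = 1.

Definition unreduced_hessenberg (m p : nat) (A : 'M[rat]_(m, p)) : Prop :=
  (forall (i : 'I_m) (j : 'I_p), (j.+1 < i)%N -> A i j = 0) /\
  (forall (i : 'I_m) (j : 'I_p), nat_of_ord i = j.+1 -> A i j != 0).

(* The columns of P together with the origin form an acute simplex:
   G = P^T P is invertible, off-diagonal entries of G^{-1} are negative,
   and row sums of G^{-1} are positive. *)
Definition acute_simplex (m p : nat) (P : 'M[rat]_(m, p)) : Prop :=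
  let G := P^T *m P in
  G \in unitmx /\
  (forall i j : 'I_p, i != j -> invmx G i j < 0) /\
  (forall i : 'I_p, 0 < \sum_(j < p) invmx G i j).

Definition topleft (m p : nat) (A : 'M[rat]_(m.+1, p.+1)) : 'M[rat]_(m, p) :=
  \matrix_(i < m, j < p) A (widen_ord (leqnSn m) i) (widen_ord (leqnSn p) j).

Definition good_ext (k : nat) (H : 'M[rat]_(k.+1, k)) (A : 'M[rat]_(k.+2, k.+1)) : Prop :=
  unreduced_hessenberg A /\ zero_one_mx A /\ acute_simplex A /\ topleft A = H.

(* Main.v *)
Require Import Defs.
From mathcomp Require Import all_boot all_order all_algebra.
From mathcomp Require Import ring lra.
Set Implicit Arguments. Unset Strict Implicit. Unset Printing Implicit Defensive.
Import Order.TTheory GRing.Theory Num.Theory.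
Local Open Scope ring_scope.

Fixpoint uf (h : nat -> nat -> rat) (n : nat) : nat -> rat :=
  match n with
  | 0 => fun i => if i == 0%N then 1 else 0
  | n'.+1 => fun i => if i == n'.+1 then - \sum_(l < n'.+1) h l n' * uf h n' l
                      else uf h n' i
  end.
Definition u h i := uf h i i.

Lemma ufE h n i : (i <= n)%N -> uf h n i = u h i.
Proof.
elim: n => [|n IH] Hi; first by rewrite leqn0 in Hi; rewrite (eqP Hi).
rewrite /=; case: eqP => [->|/eqP ne]; first by rewrite /u /= eqxx.
by apply: IH; rewrite -ltnS ltn_neqAle ne Hi.
Qed.

Lemma u0 h : u h 0 = 1. Proof. by []. Qed.

Lemma uS h j : u h j.+1 = - \sum_(l < j.+1) h l j * u h l.
Proof.
rewrite /u /= eqxx; congr (- _); apply: eq_bigr => l _.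
by rewrite ufE // -ltnS.
Qed.

Lemma sum_trunc (F : nat -> rat) n M : (n <= M)%N ->
  (forall i, (n <= i)%N -> (i < M)%N -> F i = 0) -> \sum_(i < M) F i = \sum_(i < n) F i.
Proof.
move=> nM F0. rewrite -!(big_mkord xpredT) (big_cat_nat (leq0n n) nM) /=.
rewrite [X in _ + X = _](_ : _ = 0) ?addr0 //.
rewrite big_nat_cond big1 // => i /andP[/andP[H1 H2] _]; exact: F0.
Qed.

Definition hessn (h : nat -> nat -> rat) := forall r j, (j.+1 < r)%N -> h r j = 0.
Definition sub1 (h : nat -> nat -> rat) K := forall j, (j < K)%N -> h j.+1 j = 1.

Lemma orth_u h m (w : nat -> rat) : hessn h -> sub1 h m ->
  (forall j, (j < m)%N -> \sum_(r < m.+1) h r j * w r = 0) ->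
  forall r, (r <= m)%N -> w r = w 0%N * u h r.
Proof.
move=> hh s1 orth.
suff: forall r, (r <= m)%N -> forall r', (r' <= r)%N -> w r' = w 0%N * u h r'.
  by move=> P r0 Hr0; exact: (P r0 Hr0 r0 (leqnn r0)).
elim=> [|r IH] Hr r' Hr'.
  by rewrite leqn0 in Hr'; rewrite (eqP Hr') u0 mulr1.
case: (ltnP r' r.+1) => Hr2; first by apply: IH => //; exact: ltnW.
have -> : r' = r.+1 by apply/eqP; rewrite eqn_leq Hr' Hr2.
have := orth r Hr.
rewrite (@sum_trunc (fun i => h i r * w i) r.+2 m.+1) //; last first.
  by move=> i Hi _; rewrite hh // mul0r.
rewrite big_ord_recr /= s1 // mul1r uS => E.
have E2 : w r.+1 = - \sum_(i < r.+1) h i r * w i by apply/eqP; rewrite -addr_eq0 addrC E.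
rewrite E2 mulrN mulr_sumr; congr (- _); apply: eq_bigr => i _.
have Hi : (i <= r)%N by rewrite -ltnS ltn_ord.
by rewrite (IH (ltnW Hr) i Hi) mulrCA.
Qed.

Definition sig (h : nat -> nat -> rat) m (v : nat -> rat) := \sum_(i < m.+1) u h i * v i.
Definition WV (h : nat -> nat -> rat) m (v : nat -> rat) := exists x : nat -> rat,
  (forall i, (i < m)%N -> 0 < x i) /\ \sum_(i < m) x i < 1 /\
  forall j, (j < m)%N -> \sum_(r < m.+1) h r j * (v r - \sum_(i < m) h r i * x i) = 0.

Lemma m3 (a b c : rat) : a * (b * c) = c * (b * a).
Proof. by rewrite mulrC -mulrA mulrCA. Qed.

Lemma hu0 h m i : hessn h -> sub1 h m -> (i < m)%N -> \sum_(r < m.+1) h r i * u h r = 0.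
Proof.
move=> hh s1 im.
rewrite (@sum_trunc (fun r => h r i * u h r) i.+2 m.+1) //; last first.
  by move=> r Hr _; rewrite hh // mul0r.
by rewrite big_ord_recr /= s1 // mul1r uS addrC addNr.
Qed.

Lemma sum_pos_ge (x : nat -> rat) n : (forall i, (i < n)%N -> 0 <= x i) ->
  forall j, (j < n)%N -> x j <= \sum_(i < n) x i.
Proof.
move=> xp j jn.
rewrite (bigD1 (Ordinal jn)) //= lerDl sumr_ge0 // => i _; exact: xp.
Qed.

Lemma WV_Cp h m v : hessn h -> sub1 h m -> (0 < m)%N -> WV h m v ->
  (v m = 0 -> u h m * sig h m v < 0) /\ (v m = 1 -> 0 < u h m * sig h m v).
Proof.
move=> hh; case: m => // m' s1 _ [x [xpos [xsum orth]]].
pose w := fun r => v r - \sum_(i < m'.+1) h r i * x i.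
have Hw : forall r, (r <= m'.+1)%N -> w r = w 0%N * u h r.
  by apply: orth_u hh s1 _ => j Hj; exact: orth j Hj.
pose D := \sum_(i < m'.+2) u h i ^+ 2.
have D0 : 0 < D.
  rewrite /D big_ord_recl u0 expr1n ltr_pwDl // sumr_ge0 // => i _; exact: sqr_ge0.
have Hsig : sig h m'.+1 v = w 0%N * D.
  have E1 : sig h m'.+1 v = \sum_(r < m'.+2) u h r * (\sum_(i < m'.+1) h r i * x i)
                      + \sum_(r < m'.+2) u h r * w r.
    by rewrite -big_split /=; apply: eq_bigr => r _; rewrite -mulrDr /w addrC subrK.
  have E2 : \sum_(r < m'.+2) u h r * (\sum_(i < m'.+1) h r i * x i) = 0.
    under eq_bigr do rewrite mulr_sumr.
    rewrite exchange_big /= big1 // => i _.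
    transitivity (x i * \sum_(r < m'.+2) h r i * u h r);
      last by rewrite (@hu0 h m'.+1 i hh s1 (ltn_ord i)) mulr0.
    by rewrite mulr_sumr; apply: eq_bigr => r _; exact: m3.
  rewrite E1 E2 add0r /D mulr_sumr; apply: eq_bigr => r _.
  by rewrite (Hw r (ltn_ord r)) mulrCA expr2 mulrA.
have Hlast : v m'.+1 = x m' + w 0%N * u h m'.+1.
  rewrite -Hw // /w big_ord_recr /= s1 // mul1r big1; first by rewrite add0r addrC subrK.
  by move=> i _; rewrite hh ?mul0r // ltnS ltn_ord.
have xm0 : 0 < x m' by exact: xpos.
have xm1 : x m' < 1.
  apply: le_lt_trans xsum; apply: sum_pos_ge => // i Hi.
  exact: ltW (xpos i Hi).
rewrite Hsig mulrA (mulrC (u h _)); split => Hv.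
  have E : w 0%N * u h m'.+1 = - x m'.
    by apply/eqP; rewrite -addr_eq0 addrC -Hlast Hv.
  by rewrite E pmulr_llt0 // oppr_lt0.
have E : w 0%N * u h m'.+1 = 1 - x m'.
  by rewrite -Hv Hlast addrC addKr.
by rewrite E pmulr_lgt0 // subr_gt0.
Qed.

Lemma WV_her h m v : hessn h -> WV h m.+1 v -> WV h m (fun r => h r m) -> WV h m v.
Proof.
move=> hh [x [xp [xs xo]]] [y [yp [ys yo]]].
have xm : 0 < x m by exact: xp.
exists (fun i => x i + x m * y i); split; [|split].
- by move=> i im; rewrite addr_gt0 ?mulr_gt0 ?xp ?yp // leqW.
- rewrite big_split /= -mulr_sumr; apply: lt_trans xs.
  rewrite big_ord_recr /= ltrD2l.
  by rewrite -[X in _ < X]mulr1 ltr_pM2l.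
move=> j jm.
have A' : \sum_(r < m.+1) h r j * (v r - \sum_(i < m.+1) h r i * x i) = 0.
  by have := xo j (leqW jm); rewrite big_ord_recr /= (hh m.+1 j) // mul0r addr0.
have B' := yo j jm.
transitivity (\sum_(r < m.+1) h r j * (v r - \sum_(i < m.+1) h r i * x i)
   + x m * \sum_(r < m.+1) h r j * (h r m - \sum_(i < m) h r i * y i)); last first.
  by rewrite A' B' mulr0 addr0.
rewrite mulr_sumr -big_split; apply: eq_bigr => r _ /=.
rewrite big_ord_recr /=.
have -> : \sum_(i < m) h r i * (x i + x m * y i) =
   \sum_(i < m) h r i * x i + x m * \sum_(i < m) h r i * y i.
  rewrite mulr_sumr -big_split; apply: eq_bigr => i _ /=.
  by rewrite mulrDr mulrCA.
move: (\sum_(i < m) h r i * x i) (\sum_(i < m) h r i * y i) => S T.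
move: (h r j) (h r m) (v r) (x m) => a b c d.
ring.
Qed.

Lemma WV_down h M v : hessn h -> WV h M v ->
  (forall m, (m < M)%N -> WV h m (fun r => h r m)) -> forall j, (j <= M)%N -> WV h j v.
Proof.
move=> hh HW Hc j jM.
have P : forall d, (d <= M)%N -> WV h (M - d) v.
  elim=> [|d IH] dM; first by rewrite subn0.
  have := IH (ltnW dM); rewrite -(subnSK dM) => H.
  apply: WV_her hh H _; apply: Hc.
  by rewrite subnS prednK ?leq_subr // subn_gt0.
by have := P (M - j)%N (leq_subr _ _); rewrite subKn.
Qed.

Definition valid h m (v : nat -> rat) :=
  (forall r, (r <= m)%N -> v r = 0 \/ v r = 1) /\
  forall j, (0 < j)%N -> (j <= m)%N ->
    (v j = 0 -> u h j * sig h j v < 0) /\ (v j = 1 -> 0 < u h j * sig h j v).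

Lemma WV_valid h M v : hessn h -> sub1 h M ->
  (forall m, (m < M)%N -> WV h m (fun r => h r m)) ->
  (forall r, (r <= M)%N -> v r = 0 \/ v r = 1) -> WV h M v -> valid h M v.
Proof.
move=> hh s1 Hc zo HW; split => // j j0 jM.
apply: (WV_Cp hh _ j0 (WV_down hh HW Hc jM)).
by move=> i ij; apply: s1; apply: leq_trans ij jM.
Qed.

Lemma valid_weak h m v : valid h m.+1 v -> valid h m v.
Proof.
case=> zo cp; split => [r rm|j j0 jm]; first by apply: zo; exact: leqW.
by apply: cp => //; exact: leqW.
Qed.

Lemma sig_ext h m v v' : (forall r, (r <= m)%N -> v r = v' r) -> sig h m v = sig h m v'.
Proof. by move=> E; apply: eq_bigr => i _; rewrite E // -ltnS ltn_ord. Qed.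

Lemma sigS h m v : sig h m.+1 v = sig h m v + u h m.+1 * v m.+1.
Proof. by rewrite /sig big_ord_recr. Qed.

Lemma sig_col h m : sig h m (fun r => h r m) = - u h m.+1.
Proof. by rewrite uS opprK; apply: eq_bigr => i _; rewrite mulrC. Qed.

Lemma classes h K : (forall m, (m < K)%N -> valid h m (fun r => h r m)) ->
  forall m, (m <= K)%N -> forall v v', valid h m v -> valid h m v' ->
  (0 < sig h m v) = (0 < sig h m v') -> forall r, (r <= m)%N -> v r = v' r.
Proof.
move=> Hc; elim=> [|m IH] mK v v' Hv Hv' Hs r rm.
  rewrite leqn0 in rm; rewrite (eqP rm).
  move: Hs; rewrite /sig !big_ord1 u0 !mul1r.
  case: Hv => [zo _]; case: Hv' => [zo' _].
  by case: (zo 0%N (leqnn _)) => ->; case: (zo' 0%N (leqnn _)) => ->.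
have mK' : (m < K)%N := mK.
have Hg := Hc m mK'.
pose U := u h m.+1.
have key : forall w, valid h m.+1 w -> (0 < sig h m w) = (0 < - U) -> sig h m w = - U.
  move=> w Hw E; rewrite -(sig_col h m); apply: sig_ext; apply: IH => //.
  - exact: ltnW.
  - exact: valid_weak.
  - by rewrite sig_col.
have tdet : forall w, valid h m.+1 w ->
    w m.+1 = if (0 < sig h m w) == (0 < - U) then 0 else 1.
  move=> w Hw; have [zo cp] := Hw; have [c0 c1] := cp m.+1 (ltn0Sn m) (leqnn _).
  rewrite sigS in c0 c1.
  case: eqP => E.
    have Es := key w Hw (E).
    case: (zo m.+1 (leqnn _)) => // H1; exfalso.
    by have := c1 H1; rewrite Es H1 mulr1 addNr mulr0 ltxx.
  case: (zo m.+1 (leqnn _)) => // H0; exfalso.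
  have := c0 H0; rewrite H0 mulr0 addr0 -/U.
  case: (ltrP 0 (sig h m w)) E => sp E.
    have U0 : 0 <= U by rewrite -oppr_le0 leNgt; apply/negP => H; apply: E; rewrite H.
    by rewrite ltNge mulr_ge0 // ltW.
  have U0 : U <= 0 by rewrite -oppr_ge0; case: ltrP E => // H _; exact: ltW.
  by rewrite ltNge mulr_le0.
have pres : forall w, valid h m.+1 w -> (0 < sig h m.+1 w) = (0 < sig h m w).
  move=> w Hw; rewrite sigS (tdet w Hw); case: eqP => E; first by rewrite mulr0 addr0.
  rewrite mulr1 -/U.
  have [zo cp] := Hw; have c1 := (cp m.+1 (ltn0Sn m) (leqnn _)).2.
  have H1 : w m.+1 = 1 by rewrite (tdet w Hw); case: eqP.
  have P := c1 H1; rewrite sigS H1 mulr1 -/U in P.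
  case: (ltrP 0 (sig h m w)) E => sp E.
    have U0 : 0 <= U by rewrite -oppr_le0 leNgt; apply/negP => H; apply: E; rewrite H.
    have U1 : 0 < U.
      rewrite lt0r U0 andbT; apply/negP => /eqP U00; move: P; rewrite U00 mul0r ltxx.
      done.
    by rewrite addr_gt0.
  have U1 : U < 0 by rewrite -oppr_gt0; case: ltrP E => // H _.
  rewrite nmulr_rgt0 // in P.
  by apply/negbTE; rewrite -leNgt; apply: ltW.
have Hs' : (0 < sig h m v) = (0 < sig h m v') by rewrite -(pres v Hv) -(pres v' Hv').
have pre : forall r, (r <= m)%N -> v r = v' r.
  by apply: IH => //; [exact: ltnW | exact: valid_weak | exact: valid_weak].
case: (ltnP r m.+1) => rm'.
  by apply: pre; rewrite -ltnS.
have -> : r = m.+1 by apply/eqP; rewrite eqn_leq rm rm'.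
by rewrite (tdet v Hv) (tdet v' Hv') (sig_ext h pre).
Qed.

Definition nf (m n : nat) (P : 'M[rat]_(m, n)) : nat -> nat -> rat :=
  fun r c => if insub r is Some i then (if insub c is Some j then P i j else 0) else 0.

Lemma nfE m n (P : 'M[rat]_(m, n)) (i : 'I_m) (j : 'I_n) : nf P i j = P i j.
Proof. by rewrite /nf !valK. Qed.

Lemma extract m (P : 'M[rat]_(m.+2, m.+1)) : acute_simplex P ->
  (forall j : 'I_m, P ord_max (widen_ord (leqnSn m) j) = 0) ->
  WV (nf P) m (fun r => nf P r m).
Proof.
rewrite /acute_simplex => -[Gu [Hoff Hrow]] Hlast.
set G := P^T *m P in Gu Hoff Hrow.
set N := invmx G in Hoff Hrow.
pose p : 'I_m.+1 := ord_max.
have NG : N *m G = 1%:M by exact: mulVmx.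
have zp : 0 < N p p.
  have := Hrow p; rewrite (bigD1 p) //= => H.
  apply: lt_le_trans H _; rewrite gerDl.
  by rewrite sumr_le0 // => i ip; apply: ltW; apply: Hoff; rewrite eq_sym.
have zp0 : N p p != 0 by rewrite gt_eqF.
pose x := fun i : nat => - nf N m i / N p p.
have nfNw : forall i : 'I_m, nf N m i = N p (widen_ord (leqnSn m) i).
  by move=> i; rewrite -nfE.
exists x; split; [|split].
- move=> i im; rewrite /x (nfNw (Ordinal im)) divr_gt0 // oppr_gt0 Hoff //.
  by rewrite /p -(inj_eq val_inj) /= neq_ltn im orbT.
- have := Hrow p; rewrite big_ord_recr /= => H.
  rewrite /x -mulr_suml sumrN ltr_pdivrMr // mul1r.
  rewrite (eq_bigr _ (fun i _ => nfNw i)).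
  by rewrite -subr_gt0 opprK addrC.
move=> j jm.
pose l : 'I_m.+1 := widen_ord (leqnSn m) (Ordinal jm).
have F1 : \sum_(q < m.+1) N p q * G q l = 0.
  have := congr1 (fun M : 'M[rat]_m.+1 => M p l) NG; rewrite !mxE /= => ->.
  suff -> : (p == l) = false by [].
  by apply/negbTE; rewrite -(inj_eq val_inj) /= neq_ltn jm orbT.
have F2 : \sum_(r < m.+2) P r l * (\sum_(q < m.+1) N p q * P r q) = 0.
  rewrite -[RHS]F1; under [RHS]eq_bigr do rewrite /G mxE mulr_sumr.
  rewrite exchange_big /=; apply: eq_bigr => r _; rewrite mulr_sumr.
  by apply: eq_bigr => q _; rewrite mxE mulrCA (mulrC (P r l)).
have F3 : \sum_(r < m.+1) P (widen_ord (leqnSn m.+1) r) l *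
     (\sum_(q < m.+1) N p q * P (widen_ord (leqnSn m.+1) r) q) = 0.
  by move: F2; rewrite big_ord_recr /= Hlast mul0r addr0.
have xE : forall i, N p p * x i = - nf N m i.
  by move=> i; rewrite /x mulrCA divff // mulr1.
apply/eqP; rewrite -(mulrI_eq0 _ (lregP zp0)); apply/eqP.
rewrite -[RHS]F3 mulr_sumr; apply: eq_bigr => r _.
rewrite mulrCA mulrBr mulr_sumr.
under eq_bigr do rewrite mulrCA xE mulrN.
rewrite sumrN opprK big_ord_recr /=.
rewrite -!nfE /=.
rewrite addrC; congr (_ * (_ + _)); apply: eq_bigr => i _; by rewrite -!nfE /= mulrC.
Qed.

Definition acuteG p (G : 'M[rat]_p) := G \in unitmx /\
  (forall i j : 'I_p, i != j -> invmx G i j < 0) /\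
  (forall i : 'I_p, 0 < \sum_(j < p) invmx G i j).

Lemma acute_G m p (P : 'M[rat]_(m, p)) : acute_simplex P <-> acuteG (P^T *m P).
Proof. by []. Qed.

Lemma facet p (G : 'M[rat]_p.+1) (G' : 'M[rat]_p) :
  (forall i j, G' i j = G (widen_ord (leqnSn p) i) (widen_ord (leqnSn p) j)) ->
  acuteG G -> acuteG G'.
Proof.
move=> EG [Gu [Hoff Hrow]].
set N := invmx G in Hoff Hrow.
pose q : 'I_p.+1 := ord_max.
pose w := widen_ord (leqnSn p).
have NG : N *m G = 1%:M by exact: mulVmx.
have wq : forall i, w i != q.
  by move=> i; rewrite -(inj_eq val_inj) /= neq_ltn ltn_ord.
have zp : 0 < N q q.
  have := Hrow q; rewrite (bigD1 q) //= => H.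
  apply: lt_le_trans H _; rewrite gerDl.
  by rewrite sumr_le0 // => i ip; apply: ltW; apply: Hoff; rewrite eq_sym.
have zp0 : N q q != 0 by rewrite gt_eqF.
pose K := \matrix_(i < p, j < p) (N (w i) (w j) - N (w i) q * N q (w j) / N q q).
have NGs : forall a b, \sum_(l < p) N a (w l) * G (w l) b = (a == b)%:R - N a q * G q b.
  move=> a b; have := congr1 (fun M : 'M[rat]_p.+1 => M a b) NG.
  rewrite !mxE big_ord_recr /= => <-; by rewrite addrK.
have m4 : forall b c d e : rat, b * c / d * e = b / d * (c * e).
  by move=> b c d e; rewrite -!mulrA (mulrCA c).
have KG : K *m G' = 1%:M.
  apply/matrixP => i j; rewrite !mxE.
  transitivity (\sum_(l < p) N (w i) (w l) * G (w l) (w j)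
     - N (w i) q / N q q * \sum_(l < p) N q (w l) * G (w l) (w j)).
    rewrite mulr_sumr -sumrB; apply: eq_bigr => l _; rewrite !mxE EG mulrBl.
    by rewrite m4.
  rewrite !NGs.
  have -> : (q == w j) = false by apply/negbTE; rewrite eq_sym wq.
  rewrite sub0r mulrN opprK mulrA divfK // subrK.
  have -> : (w i == w j) = (i == j).
    by apply/eqP/eqP => [E|->] //; apply: val_inj; exact: (congr1 val E).
  by [].
have [Ku G'u] := mulmx1_unit KG.
have iG : invmx G' = K.
  by rewrite -[invmx G']mul1mx -KG -mulmxA mulmxV ?mulmx1.
split => //; rewrite iG; split.
  move=> i j ij; rewrite !mxE.
  have a0 : N (w i) (w j) < 0.
    by apply: Hoff; apply: contra ij => /eqP E; apply/eqP; apply: val_inj; exact: (congr1 val E).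
  have b0 : 0 < N (w i) q * N q (w j) / N q q.
    rewrite divr_gt0 // nmulr_rgt0; first by apply: Hoff; rewrite eq_sym wq.
    by apply: Hoff; rewrite wq.
  by rewrite subr_lt0; apply: lt_trans a0 b0.
move=> i.
have Ri := Hrow (w i); have Rq := Hrow q.
rewrite big_ord_recr /= in Ri; rewrite big_ord_recr /= in Rq.
have bn : N (w i) q < 0 by apply: Hoff; rewrite wq.
pose t := N (w i) q / N q q.
have tn : t < 0 by rewrite /t pmulr_llt0 // invr_gt0.
have td : t * N q q = N (w i) q by rewrite /t divfK.
have -> : \sum_(j < p) K i j = \sum_(j < p) N (w i) (w j) - t * \sum_(j < p) N q (w j).
  rewrite /t mulr_sumr -sumrB; apply: eq_bigr => j _; rewrite !mxE.
  by rewrite -mulrA (mulrC (N q _)) mulrA.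
have -> : \sum_(j < p) N (w i) (w j) - t * \sum_(j < p) N q (w j) =
   (\sum_(j < p) N (w i) (w j) + N (w i) q) - t * (\sum_(j < p) N q (w j) + N q q).
  by rewrite mulrDr td opprD addrACA subrr addr0.
rewrite addr_gt0 // oppr_gt0 pmulr_llt0 //.
Qed.

Lemma nf_ord M N (P : 'M[rat]_(M, N)) r i (Hr : (r < M)%N) (Hi : (i < N)%N) :
  nf P r i = P (Ordinal Hr) (Ordinal Hi).
Proof. exact: (nfE P (Ordinal Hr) (Ordinal Hi)). Qed.

Lemma WV_ext h h' m v v' : (forall r i, (r <= m)%N -> (i < m)%N -> h r i = h' r i) ->
  (forall r, (r <= m)%N -> v r = v' r) -> WV h m v -> WV h' m v'.
Proof.
move=> Eh Ev [x [xp [xs xo]]]; exists x; do 2 split => //; move=> j jm.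
rewrite -[RHS](xo j jm); apply: eq_bigr => r _.
have rm : (r <= m)%N by rewrite -ltnS ltn_ord.
rewrite Eh // Ev //; congr (_ * (_ - _)); apply: eq_bigr => i _; by rewrite Eh.
Qed.

Lemma sub1_le h K m : sub1 h K -> (m <= K)%N -> sub1 h m.
Proof. by move=> s mK j jm; apply: s; apply: leq_trans jm mK. Qed.

Definition Tm (h : nat -> nat -> rat) m : 'M[rat]_(m.+1, m) := \matrix_(a < m.+1, b < m) h a b.

Lemma Tm_down h m : hessn h -> acute_simplex (Tm h m.+1) -> acute_simplex (Tm h m).
Proof.
move=> hh; rewrite !acute_G; apply: facet => i j; rewrite !mxE.
rewrite [RHS]big_ord_recr /= !mxE (hh m.+1 (widen_ord _ i)) ?mul0r ?addr0 //=; last by rewrite ltnS ltn_ord.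
by apply: eq_bigr => r _; rewrite !mxE.
Qed.

Lemma Tm_all h K : hessn h -> acute_simplex (Tm h K) -> forall m, (m <= K)%N -> acute_simplex (Tm h m).
Proof.
move=> hh HK m mK.
have P : forall d, (d <= K)%N -> acute_simplex (Tm h (K - d)).
  elim=> [|d IH] dK; first by rewrite subn0.
  have := IH (ltnW dK); rewrite -(subnSK dK); exact: Tm_down.
by have := P (K - m)%N (leq_subr _ _); rewrite subKn.
Qed.

Lemma W_col h m : hessn h -> acute_simplex (Tm h m.+1) -> WV h m (fun r => h r m).
Proof.
move=> hh HT.
have E := extract HT.
have Z : forall j : 'I_m, Tm h m.+1 ord_max (widen_ord (leqnSn m) j) = 0.
  by move=> j; rewrite mxE hh //= ltnS ltn_ord.
apply: WV_ext (E Z).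
  move=> r i rm im.
  have Hr : (r < m.+2)%N by apply: leqW.
  have Hi : (i < m.+1)%N by apply: ltnW.
  by rewrite (nf_ord _ Hr Hi) mxE.
move=> r rm.
have Hr : (r < m.+2)%N by apply: leqW.
by rewrite (nf_ord _ Hr (ltnSn m)) mxE.
Qed.

Lemma one_of (a : rat) : (a = 0 \/ a = 1) -> a != 0 -> a = 1.
Proof. by case=> -> //; rewrite eqxx. Qed.

Lemma ext_eq k (H : 'M[rat]_(k.+1, k)) (A B : 'M[rat]_(k.+2, k.+1)) :
  good_ext H A -> good_ext H B -> (forall r, (r <= k)%N -> nf A r k = nf B r k) -> A = B.
Proof.
move=> [[Ah1 Ah2] [Azo [_ Atl]]] [[Bh1 Bh2] [Bzo [_ Btl]]] E; apply/matrixP => i j.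
case: (ltnP j k) => jk.
  have -> : j = widen_ord (leqnSn k) (Ordinal jk) by apply: val_inj.
  case: (ltnP i k.+1) => ik.
    have -> : i = widen_ord (leqnSn k.+1) (Ordinal ik) by apply: val_inj.
    transitivity (H (Ordinal ik) (Ordinal jk)); first by rewrite -Atl mxE.
    by rewrite -Btl mxE.
  by rewrite Ah1 ?Bh1 //= (leq_trans _ ik).
have jE : j = Ordinal (ltnSn k).
  by apply: val_inj => /=; apply/eqP; rewrite eqn_leq jk -ltnS ltn_ord.
case: (ltnP i k.+1) => ik.
  have := E i ik; rewrite (nf_ord A (ltn_ord i) (ltnSn k)) (nf_ord B (ltn_ord i) (ltnSn k)).
  have -> : Ordinal (ltn_ord i) = i by apply: val_inj.
  by rewrite jE.
have iE : nat_of_ord i = j.+1.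
  by rewrite jE /=; apply/eqP; rewrite eqn_leq ik -ltnS ltn_ord.
by rewrite (one_of (Azo i j) (Ah2 i j iE)) (one_of (Bzo i j) (Bh2 i j iE)).
Qed.

Theorem lemma6p6 (k : nat) (H : 'M[rat]_(k.+1, k)) :
  unreduced_hessenberg H -> zero_one_mx H -> acute_simplex H ->
  forall A1 A2 A3 : 'M[rat]_(k.+2, k.+1),
    good_ext H A1 -> good_ext H A2 -> good_ext H A3 ->
    A1 = A2 \/ A1 = A3 \/ A2 = A3.
Proof.
move=> [Hh1 Hh2] Hzo Hac A1 A2 A3 G1 G2 G3.
pose h := nf H.
have hh : hessn h.
  move=> r j jr; rewrite /h /nf.
  case: insubP => [a _ Ea|//]; case: insubP => [b _ Eb|//].
  by apply: Hh1; rewrite Ea Eb.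
have hzo : forall r j, h r j = 0 \/ h r j = 1.
  move=> r j; rewrite /h /nf.
  case: insubP => [a _ Ea|]; last by left.
  case: insubP => [b _ Eb|]; last by left.
  exact: Hzo.
have s1 : sub1 h k.
  move=> j jk; have jk1 : (j.+1 < k.+1)%N by [].
  rewrite /h (nf_ord H jk1 jk); apply: one_of; first exact: Hzo.
  exact: Hh2.
have TH : Tm h k = H by apply/matrixP => a b; rewrite mxE /h nfE.
have Tac : forall m, (m <= k)%N -> acute_simplex (Tm h m).
  by apply: Tm_all hh _; rewrite TH.
have Wc : forall m, (m < k)%N -> WV h m (fun r => h r m).
  by move=> m mk; apply: W_col hh (Tac m.+1 mk).
have Vc : forall m, (m < k)%N -> valid h m (fun r => h r m).
  move=> m mk; apply: WV_valid hh (sub1_le s1 (ltnW mk)) _ _ (Wc m mk).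
    by move=> m' m'm; apply: Wc; exact: ltn_trans m'm mk.
  by move=> r _; exact: hzo.
have cls := classes Vc (leqnn k).
have VA : forall A, good_ext H A -> valid h k (fun r => nf A r k).
  move=> A [[Ah1 Ah2] [Azo [Aac Atl]]].
  apply: WV_valid hh s1 Wc _ _.
    move=> r _; rewrite /nf.
    case: insubP => [a _ Ea|]; last by left.
    case: insubP => [b _ Eb|]; last by left.
    exact: Azo.
  have Z : forall j : 'I_k, A ord_max (widen_ord (leqnSn k) j) = 0.
    by move=> j; apply: Ah1; rewrite /= ltnS ltn_ord.
  apply: WV_ext (extract Aac Z) => //.
  move=> r i rk ik.
  have Hr : (r < k.+2)%N by apply: leqW.
  have Hi : (i < k.+1)%N by apply: ltnW.
  rewrite (nf_ord A Hr Hi) /h (nf_ord H (rk : (r < k.+1)%N) ik) -Atl mxE.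
  by congr (A _ _); apply: val_inj.
have V1 := VA A1 G1; have V2 := VA A2 G2; have V3 := VA A3 G3.
case E1 : (0 < sig h k (fun r => nf A1 r k));
case E2 : (0 < sig h k (fun r => nf A2 r k));
case E3 : (0 < sig h k (fun r => nf A3 r k)).
all: first [ left; apply: ext_eq G1 G2 _; apply: cls V1 V2 _; by rewrite E1 E2
           | right; left; apply: ext_eq G1 G3 _; apply: cls V1 V3 _; by rewrite E1 E3
           | right; right; apply: ext_eq G2 G3 _; apply: cls V2 V3 _; by rewrite E2 E3 ].
Qed.
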